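(* Let $R$ be a dp-minimal integral domain with maximal ideal $\mathfrak M$ and fraction field $K$. (1) If $\mathcal O$ is a local overring of $R$ that is non-dominant (i.e. $\mathfrak M\not\subseteq\mathfrak m$, where $\mathfrak m$ is the maximal ideal of $\mathcal O$), then $\mathcal O$ is a valuation ring and $\mathcal O=R_{\mathfrak p}$ for some prime ideal $\mathfrak p\neq\mathfrak M$ of $R$. (2) Let $\mathcal O\supseteq R$ be a valuation overring with maximal ideal $\mathfrak m$ which dominates $R$ (i.e. $\mathfrak M\subseteq\mathfrak m$), and assume the structure $(K;R,\mathcal O)$ (the field $K$ with unary predicates for $R$ and $\mathcal O$) is dp-minimal. Then $\mathcal O\subseteq R_{\mathfrak p}$ for every prime ideal $\mathfrak p\neq\mathfrak M$ of $R$. Furthermore every prime ideal $\mathfrak p\neq \mathfrak M$ of $R$ is a prime ideal of $\mathcal O$, and every prime ideal of $\mathcal O$ strictly contained in $\mathfrak M$ is a prime ideal of $R$; i.e. $\mathrm{Spec}(R)\setminus\{\mathfrak M\}$ is an initial segment of $\mathrm{Spec}(\mathcal O)\setminus\{\mathfrak m\}$.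
   Context: Rings are commutative with identity; dp-minimal means the theory has dp-rank $1$ (a dp-minimal domain is local). An overring of $R$ is a ring $S$ with $R\subseteq S\subseteq\mathrm{Frac}(R)$. Prime spectra of $R$ and $\mathcal O$ are linearly ordered by inclusion. *)

(* Defs.v *)
From HB Require Import structures.
From mathcomp Require Import all_boot all_order all_algebra fraction.
Set Implicit Arguments. Unset Strict Implicit. Unset Printing Implicit Defensive.
Import GRing.Theory.
Local Open Scope ring_scope.
Notation "x %:F" := (@FracField.tofrac _ x) : ring_scope.

Inductive term : Type :=
| TVar : nat -> term
| TZero : term
| TOne : term
| TAdd : term -> term -> term
| TOpp : term -> term
| TMul : term -> term -> term.

Inductive formula (k : nat) : Type :=
| FEq : term -> term -> formula k
| FPred : 'I_k -> term -> formula k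
| FNeg : formula k -> formula k
| FAnd : formula k -> formula k -> formula k
| FEx : nat -> formula k -> formula k.

Fixpoint eval_term (T : nzRingType) (e : nat -> T) (t : term) : T :=
  match t with
  | TVar n => e n
  | TZero => 0
  | TOne => 1
  | TAdd t1 t2 => eval_term e t1 + eval_term e t2
  | TOpp t1 => - eval_term e t1
  | TMul t1 t2 => eval_term e t1 * eval_term e t2
  end.

Definition upd (T : Type) (e : nat -> T) (n : nat) (x : T) : nat -> T :=
  fun m => if m == n then x else e m.

Fixpoint holds (T : nzRingType) (k : nat) (P : 'I_k -> T -> Prop)
    (e : nat -> T) (f : formula k) : Prop :=
  match f with
  | FEq t1 t2 => eval_term e t1 = eval_term e t2
  | FPred i t => P i (eval_term e t)
  | FNeg f1 => ~ holds P e f1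
  | FAnd f1 f2 => holds P e f1 /\ holds P e f2
  | FEx n f1 => exists x : T, holds P (upd e n x) f1
  end.

(* An ict-pattern of depth 2 and length n for phi(x;y), psi(x;z), with the
   object variable x being variable 0 and parameters given by environments
   a_i, b_j (all other variables are parameters). *)
Definition ict_pattern2 (T : nzRingType) (k : nat) (P : 'I_k -> T -> Prop)
    (phi psi : formula k) (n : nat) : Prop :=
  exists (a b : nat -> nat -> T),
    forall i j, (i < n)%N -> (j < n)%N ->
      exists c : T,
        (forall l, (l < n)%N -> (holds P (upd (a l) 0 c) phi <-> l = i)) /\
        (forall l, (l < n)%N -> (holds P (upd (b l) 0 c) psi <-> l = j)).

(* dp-minimality of the theory of the structure: no ict-pattern of depth 2 in
   one variable in any model of the theory; by compactness, equivalently for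
   every pair of formulas there is a bound on the length of such patterns in
   the structure itself. *)
Definition dp_minimal (T : nzRingType) (k : nat) (P : 'I_k -> T -> Prop) : Prop :=
  forall phi psi : formula k, exists n : nat, ~ ict_pattern2 P phi psi n.

Definition no_preds (T : nzRingType) : 'I_0 -> T -> Prop := fun _ _ => False.

(* The structure (K; R, O): predicate 0 is R (image in K), predicate 1 is O. *)
Definition KRO_preds (R : idomainType) (O : {fraction R} -> Prop)
  : 'I_2 -> {fraction R} -> Prop :=
  fun i x => if val i == 0%N then exists r : R, x = r%:F else O x.

Definition same (T : Type) (A B : T -> Prop) : Prop := forall x, A x <-> B x.

Definition ideal (R : comRingType) (I : R -> Prop) : Prop :=
  I 0 /\ (forall x y, I x -> I y -> I (x + y)) /\ (forall a x, I x -> I (a * x)).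

Definition prime_ideal (R : comRingType) (I : R -> Prop) : Prop :=
  ideal I /\ ~ I 1 /\ (forall x y, I (x * y) -> I x \/ I y).

Definition maximal_ideal (R : comRingType) (I : R -> Prop) : Prop :=
  ideal I /\ ~ I 1 /\
  (forall J, ideal J -> (forall x, I x -> J x) -> ~ J 1 -> forall x, J x -> I x).

Definition subring (K : comRingType) (O : K -> Prop) : Prop :=
  O 0 /\ O 1 /\ (forall x y, O x -> O y -> O (x + y)) /\
  (forall x, O x -> O (- x)) /\ (forall x y, O x -> O y -> O (x * y)).

Definition overring (R : idomainType) (O : {fraction R} -> Prop) : Prop :=
  subring O /\ (forall r : R, O r%:F).

Definition ideal_of (K : comRingType) (O I : K -> Prop) : Prop :=
  (forall x, I x -> O x) /\ I 0 /\ (forall x y, I x -> I y -> I (x + y)) /\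
  (forall a x, O a -> I x -> I (a * x)).

Definition prime_ideal_of (K : comRingType) (O I : K -> Prop) : Prop :=
  ideal_of O I /\ ~ I 1 /\
  (forall x y, O x -> O y -> I (x * y) -> I x \/ I y).

Definition maximal_ideal_of (K : comRingType) (O I : K -> Prop) : Prop :=
  ideal_of O I /\ ~ I 1 /\
  (forall J, ideal_of O J -> (forall x, I x -> J x) -> ~ J 1 -> forall x, J x -> I x).

Definition local_with_max (K : comRingType) (O m : K -> Prop) : Prop :=
  maximal_ideal_of O m /\ (forall m', maximal_ideal_of O m' -> same m' m).

Definition valuation_ring (K : fieldType) (O : K -> Prop) : Prop :=
  subring O /\ (forall x, x != 0 -> O x \/ O x^-1).

Definition localization (R : idomainType) (p : R -> Prop) : {fraction R} -> Prop :=
  fun x => exists a b : R, ~ p b /\ x = a%:F / b%:F.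

Definition image_in_frac (R : idomainType) (p : R -> Prop) : {fraction R} -> Prop :=
  fun x => exists r : R, p r /\ x = r%:F.

(* Main.v *)
From HB Require Import structures.
Require Import Defs.
From mathcomp Require Import all_boot all_order all_algebra fraction generic_quotient.
From mathcomp Require Import ring.
From mathcomp Require Import boolp classical_sets.
From Stdlib Require Import Classical.
Set Implicit Arguments. Unset Strict Implicit. Unset Printing Implicit Defensive.
Import GRing.Theory.
Local Open Scope ring_scope.

Lemma grp_pattern (T : comRingType) k (P : 'I_k -> T -> Prop) (phi psi : formula k)
  (G1 G2 : T -> Prop) (ea eb : nat -> nat -> T) (A B : nat -> T) n :
 (forall l c, holds P (upd (ea l) 0 c) phi <-> G2 (c - A l)) ->
 (forall l c, holds P (upd (eb l) 0 c) psi <-> G1 (c - B l)) ->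
 (forall x y, G1 x -> G1 y -> G1 (x + y)) -> (forall x, G1 x -> G1 (- x)) ->
 (forall x y, G2 x -> G2 y -> G2 (x + y)) -> (forall x, G2 x -> G2 (- x)) ->
 (forall i, (i < n)%N -> G1 (A i)) -> (forall j, (j < n)%N -> G2 (B j)) ->
 (forall i l, (i < n)%N -> (l < n)%N -> G2 (A i - A l) -> i = l) ->
 (forall j l, (j < n)%N -> (l < n)%N -> G1 (B j - B l) -> j = l) ->
 ict_pattern2 P phi psi n.
Proof.
move=> hphi hpsi G1D G1N G2D G2N hA hB hAd hBd.
exists ea, eb => i j hi hj; exists (A i + B j); split=> l hl.
- rewrite hphi; split.
  + move=> h; symmetry; apply: (hAd i l hi hl).
    have := G2D _ _ h (G2N _ (hB j hj)).
    by have -> : A i + B j - A l + - B j = A i - A l by ring.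
  + move=> ->; have -> : A i + B j - A i = B j by ring.
    exact: hB.
- rewrite hpsi; split.
  + move=> h; symmetry; apply: (hBd j l hj hl).
    have := G1D _ _ h (G1N _ (hA i hi)).
    by have -> : A i + B j - B l + - A i = B j - B l by ring.
  + move=> ->; have -> : A i + B j - B j = A i by ring.
    exact: hA.
Qed.

Lemma sym_ne (T : comRingType) (G : T -> Prop) (A : nat -> T) n :
  (forall x, G x -> G (- x)) ->
  (forall i l, (i < l)%N -> (l < n)%N -> ~ G (A i - A l)) ->
  forall i l, (i < n)%N -> (l < n)%N -> G (A i - A l) -> i = l.
Proof.
move=> GN h i l hi hl hG.
case: (ltngtP i l) => // hil.
- by case: (h i l hil hl hG).
- case: (h l i hil hi); have := GN _ hG.
  by have -> : - (A i - A l) = A l - A i by ring.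
Qed.

Definition dv (R : comRingType) (a x : R) := exists t, x = a * t.
Definition isU (R : comRingType) (x : R) := exists w, x * w = 1.

Definition phiR k : formula k :=
  FEx 3 (FEq k (TAdd (TVar 0) (TOpp (TVar 1))) (TMul (TVar 2) (TVar 3))).

Definition envR (T : comRingType) (y z : T) : nat -> T :=
  upd (upd (fun _ => 0) 1 y) 2 z.

Lemma holds_phiR (T : comRingType) k (P : 'I_k -> T -> Prop) y z c :
  holds P (upd (envR y z) 0 c) (phiR k) <-> dv z (c - y).
Proof. by []. Qed.

Definition NoPat (R : comRingType) (N : nat) :=
  forall (a b : R) (A B : nat -> R),
  (forall i, (i < N)%N -> dv a (A i)) -> (forall j, (j < N)%N -> dv b (B j)) ->
  (forall i l, (i < l)%N -> (l < N)%N -> ~ dv b (A i - A l)) ->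
  (forall j l, (j < l)%N -> (l < N)%N -> ~ dv a (B j - B l)) -> False.

Lemma dvD (R : comRingType) (a x y : R) : dv a x -> dv a y -> dv a (x + y).
Proof. by move=> [s ->] [t ->]; exists (s + t); ring. Qed.
Lemma dvN (R : comRingType) (a x : R) : dv a x -> dv a (- x).
Proof. by move=> [s ->]; exists (- s); ring. Qed.

Lemma noPatR (R : idomainType) : dp_minimal (@no_preds R) -> exists N, NoPat R N.
Proof.
move=> /(_ (phiR 0) (phiR 0)) [N hN]; exists N => a b A B hA hB hAd hBd.
apply: hN.
apply: (@grp_pattern R 0 _ _ _ (dv a) (dv b) (fun l => envR (A l) b) (fun l => envR (B l) a) A B).
- by move=> l c; exact: holds_phiR.
- by move=> l c; exact: holds_phiR.
- exact: dvD. - exact: dvN. - exact: dvD. - exact: dvN.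
- exact: hA. - exact: hB.
- apply: sym_ne; [exact: dvN | exact: hAd].
- apply: sym_ne; [exact: dvN | exact: hBd].
Qed.

From mathcomp Require Import zify.

Lemma one_minus_mul (R : comRingType) (v w1 w2 : R) :
  (1 - v * w1) * (1 - v * w2) = 1 - v * (w1 + w2 - v * w1 * w2).
Proof. ring. Qed.

Lemma pow_one_minus (R : comRingType) (v : R) n : exists w, (1 - v) ^+ n = 1 - v * w.
Proof.
elim: n => [|n [w IH]]; first by exists 0; rewrite expr0 mulr0 subr0.
exists (1 + w - v * 1 * w); rewrite exprS IH.
by have := one_minus_mul v 1 w; rewrite mulr1 => ->.
Qed.

Lemma split_lt i l : (i < l)%N -> exists k, l = (i + k.+1)%N.
Proof. by move=> h; exists (l - i.+1)%N; lia. Qed.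

Lemma key (R : idomainType) (u v : R) N i l : u + v = 1 -> ~ isU v -> v != 0 ->
  (i < l)%N -> (l < N)%N -> ~ dv (v ^+ N) (u ^+ N * v ^+ i - u ^+ N * v ^+ l).
Proof.
move=> huv hv v0 il lN [t ht].
have [k El] := split_lt il; have [m EN] : exists m, N = (i + m.+1)%N.
  by apply: split_lt; lia.
have hu : u = 1 - v by rewrite -huv; ring.
have [w1 hw1] := pow_one_minus v N.
have e1 : v ^+ l = v ^+ i * (v * v ^+ k) by rewrite El exprD exprS.
have e2 : v ^+ N = v ^+ i * (v * v ^+ m) by rewrite EN exprD exprS.
rewrite e1 e2 in ht.
have ht2 : v ^+ i * (u ^+ N * (1 - v * v ^+ k)) = v ^+ i * (v * (v ^+ m * t)).
  have -> : v ^+ i * (u ^+ N * (1 - v * v ^+ k)) =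
     u ^+ N * v ^+ i - u ^+ N * (v ^+ i * (v * v ^+ k)) by ring.
  by rewrite ht; ring.
have {ht2} := mulfI (expf_neq0 i v0) ht2.
rewrite hu hw1 one_minus_mul => h3.
apply: hv; exists (w1 + v ^+ k - v * w1 * v ^+ k + v ^+ m * t).
have -> : 1 = (1 - v * (w1 + v ^+ k - v * w1 * v ^+ k)) + v * (w1 + v ^+ k - v * w1 * v ^+ k) by ring.
rewrite {1}h3; ring.
Qed.

Lemma dichot (R : idomainType) N : NoPat R N -> forall u : R, isU u \/ isU (1 - u).
Proof.
move=> hN u.
case: (classic (isU u)) => hu; first by left.
case: (classic (isU (1 - u))) => hv; first by right.
exfalso.
have v0 : 1 - u != 0.
  apply/eqP => e; apply: hu; exists 1; rewrite mulr1.
  have -> : u = 1 - (1 - u) by ring.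
  by rewrite e subr0.
have u0 : u != 0 by apply/eqP => e; apply: hv; exists 1; rewrite e subr0 mulr1.
apply: (hN (u ^+ N) ((1 - u) ^+ N) (fun i => u ^+ N * (1 - u) ^+ i)
           (fun j => (1 - u) ^+ N * u ^+ j)).
- by move=> i _; exists ((1 - u) ^+ i).
- by move=> j _; exists (u ^+ j).
- move=> i l il lN; apply: key => //; ring.
- move=> j l jl lN; apply: key => //; ring.
Qed.

Lemma maxM_not1 (R : comRingType) (M : R -> Prop) : maximal_ideal M -> ~ M 1.
Proof. by case=> _ []. Qed.

Lemma idealM (R : comRingType) (M : R -> Prop) a x : ideal M -> M x -> M (a * x).
Proof. by case=> _ [] _ h; exact: h. Qed.

Lemma unit_notM (R : comRingType) (M : R -> Prop) y : maximal_ideal M -> isU y -> ~ M y.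
Proof.
move=> hM [w hw] hy; apply: (maxM_not1 hM); rewrite -hw mulrC.
by apply: idealM => //; case: hM.
Qed.

Lemma nonunit_M (R : comRingType) (M : R -> Prop) : maximal_ideal M ->
  (forall u : R, isU u \/ isU (1 - u)) -> forall y, ~ isU y -> M y.
Proof.
move=> hM hd y hy; apply: NNPP => hMy.
have [[M0 [MD MM]] [M1 Mmax]] := hM.
pose J z := exists m w, M m /\ z = m + y * w.
have hJ : ideal J.
  split; first by exists 0, 0; split => //; ring.
  split.
    move=> x z [m1 [w1 [h1 ->]]] [m2 [w2 [h2 ->]]].
    by exists (m1 + m2), (w1 + w2); split; [exact: MD | ring].
  move=> a x [m1 [w1 [h1 ->]]].
  by exists (a * m1), (a * w1); split; [exact: MM | ring].
case: (classic (J 1)) => hJ1; last first.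
  apply: hMy; apply: (Mmax J hJ _ hJ1).
  - by move=> x hx; exists x, 0; split => //; ring.
  - by exists 0, 1; split => //; ring.
case: hJ1 => m [w [hm e]].
case: (hd m) => [hmu|[z hz]].
- exact: (unit_notM hM hmu).
- apply: hy; exists (w * z); rewrite mulrA.
  by have <- : 1 - m = y * w by rewrite e; ring.
Qed.

Lemma prime_sub_M (R : comRingType) (M p : R -> Prop) : maximal_ideal M ->
  (forall u : R, isU u \/ isU (1 - u)) -> prime_ideal p -> forall x, p x -> M x.
Proof.
move=> hM hd [hp [p1 _]] x hx; apply: (nonunit_M hM hd) => [[w hw]].
by apply: p1; rewrite -hw mulrC; exact: idealM.
Qed.

Lemma prime_mul (R : comRingType) (p : R -> Prop) a b :
  prime_ideal p -> ~ p a -> ~ p b -> ~ p (a * b).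
Proof. by move=> [_ [_ h]] ha hb /h []. Qed.

Lemma prime_pow (R : comRingType) (p : R -> Prop) s n :
  prime_ideal p -> ~ p s -> ~ p (s ^+ n).
Proof.
move=> hp hs; elim: n => [|n IH]; first by rewrite expr0; case: hp => _ [].
by rewrite exprS; exact: prime_mul.
Qed.

Lemma one_minus_notp (R : comRingType) (M p : R -> Prop) s k :
  maximal_ideal M -> (forall x, p x -> M x) -> M s -> ~ p (1 - s ^+ k.+1).
Proof.
move=> hM hpM hs h; have h1 := hpM _ h.
have h2 : M (s ^+ k.+1) by rewrite exprSr; apply: idealM => //; case: hM.
apply: (maxM_not1 hM).
have -> : (1 : R) = (1 - s ^+ k.+1) + s ^+ k.+1 by ring.
by case: hM => [[_ [MD _]] _]; exact: MD.
Qed.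

Lemma exists_s (R : comRingType) (M p : R -> Prop) :
  ~ same p M -> (forall x, p x -> M x) -> exists s, M s /\ ~ p s.
Proof.
move=> hne hpM; apply: NNPP => hn; apply: hne => x; split; first exact: hpM.
by move=> hx; apply: NNPP => hpx; apply: hn; exists x.
Qed.

Lemma diff_pow (R : comRingType) (a s : R) i l : (i < l)%N ->
  exists k, a * s ^+ i - a * s ^+ l = a * (s ^+ i * (1 - s ^+ k.+1)).
Proof.
move=> /split_lt [k ->]; exists k; rewrite exprD; ring.
Qed.

Lemma Rp_val (R : idomainType) N (M p : R -> Prop) : NoPat R N -> maximal_ideal M ->
  prime_ideal p -> ~ same p M -> forall a b : R,
  (exists t, ~ p t /\ dv b (a * t)) \/ (exists t, ~ p t /\ dv a (b * t)).
Proof.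
move=> hN hM hp hne a b.
have hd := dichot hN.
have hpM := prime_sub_M hM hd hp.
have [s [hs hps]] := exists_s hne hpM.
apply: NNPP => hn.
apply: (hN a b (fun i => a * s ^+ i) (fun j => b * s ^+ j)).
- by move=> i _; exists (s ^+ i).
- by move=> j _; exists (s ^+ j).
- move=> i l il _; have [k ->] := diff_pow a s il => hdv.
  apply: hn; left; exists (s ^+ i * (1 - s ^+ k.+1)); split => //.
  by apply: prime_mul => //; [exact: prime_pow | exact: (one_minus_notp hM hpM hs)].
- move=> i l il _; have [k ->] := diff_pow b s il => hdv.
  apply: hn; right; exists (s ^+ i * (1 - s ^+ k.+1)); split => //.
  by apply: prime_mul => //; [exact: prime_pow | exact: (one_minus_notp hM hpM hs)].
Qed.

Lemma idealM' (R : comRingType) (p : R -> Prop) a x : prime_ideal p -> p x -> p (x * a).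
Proof. by move=> [hp _] hx; rewrite mulrC; exact: idealM. Qed.

Lemma p_div (R : idomainType) N (M p : R -> Prop) : NoPat R N -> maximal_ideal M ->
  prime_ideal p -> forall x f, p x -> ~ p f -> exists g, p g /\ x = f * g.
Proof.
move=> hN hM hp x f hx hf.
have hd := dichot hN.
have hpM := prime_sub_M hM hd hp.
case: (classic (isU f)) => [[w hw]|hfu].
  exists (x * w); split; first exact: idealM'.
  by rewrite mulrCA hw mulr1.
have hMf := nonunit_M hM hd hfu.
have f0 : f != 0 by apply/eqP => e; apply: hf; rewrite e; case: hp => [[]].
suff [g hg] : dv f x.
  exists g; split => //; move: hx; rewrite hg; case: hp => _ [_ h] /h [] //.
apply: NNPP => hnd.
apply: (hN x (f ^+ N) (fun i => x * f ^+ i) (fun j => f ^+ N * f ^+ j)).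
- by move=> i _; exists (f ^+ i).
- by move=> j _; exists (f ^+ j).
- move=> i l il lN; have [k ->] := diff_pow x f il => [[t ht]].
  have [m EN] : exists m, N = (i + m.+1)%N by apply: split_lt; lia.
  case: (hd (f ^+ k.+1)) => [hu|[w hw]].
    apply: (unit_notM hM hu); rewrite exprSr; apply: idealM => //; by case: hM.
  apply: hnd; exists (f ^+ m * t * w).
  have e2 : f ^+ N = f ^+ i * (f * f ^+ m) by rewrite EN exprD exprS.
  apply: (mulfI (expf_neq0 i f0)).
  have -> : f ^+ i * x = x * (f ^+ i * (1 - f ^+ k.+1)) * w by rewrite -mulrA -(mulrA _ _ w) hw; ring.
  by rewrite ht e2; ring.
- move=> j l jl lN; have [k ->] := diff_pow (f ^+ N) f jl => [[t ht]].
  have : p (x * t) by exact: idealM'.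
  rewrite -ht; apply: prime_mul => //; first exact: prime_pow.
  apply: prime_mul => //; first exact: prime_pow.
  exact: (one_minus_notp hM hpM hMf).
Qed.

From mathcomp Require Import generic_quotient.
Local Open Scope quotient_scope.
Lemma frac_rep (R : idomainType) (x : {fraction R}) :
  exists a b : R, b != 0 /\ x = a%:F / b%:F.
Proof.
elim/quotW: x => r.
exists (\n_r), (\d_r); split; first exact: denom_ratioP.
apply: (@mulIf _ (\d_r)%:F); first by rewrite tofrac_eq0 denom_ratioP.
rewrite mulfVK ?tofrac_eq0 ?denom_ratioP //.
rewrite !piE. apply/eqmodP. rewrite /= FracField.equivfE.
rewrite /FracField.mulf !numden_Ratio ?oner_eq0 ?mulf_neq0 ?denom_ratioP //.
all: try exact: oner_neq0. by rewrite !mulr1 mulrC.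
Qed.
Local Close Scope quotient_scope.

Lemma frac_eq (R : idomainType) (a b c d : R) : b != 0 -> d != 0 -> a * d = c * b ->
  a%:F / b%:F = c%:F / d%:F.
Proof.
move=> b0 d0 e; apply/eqP; rewrite eqr_div ?tofrac_eq0 // -!tofracM e //.
Qed.

Lemma notp_neq0 (R : comRingType) (p : R -> Prop) t : prime_ideal p -> ~ p t -> t != 0.
Proof. by move=> [[p0 _] _] ht; apply/eqP => e; apply: ht; rewrite e. Qed.

Lemma Rp_val_K (R : idomainType) N (M p : R -> Prop) : NoPat R N -> maximal_ideal M ->
  prime_ideal p -> ~ same p M -> forall x : {fraction R},
  localization p x \/ localization p x^-1.
Proof.
move=> hN hM hp hne x.
have [a [b [b0 ->]]] := frac_rep x.
case: (Rp_val hN hM hp hne a b) => [[t [ht [r hr]]]|[t [ht [r hr]]]].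
- left; exists r, t; split => //; apply: frac_eq => //; first exact: notp_neq0 ht.
  by rewrite hr mulrC.
- right; rewrite invf_div; exists r, t; split => //.
  have t0 := notp_neq0 hp ht.
  have a0 : a != 0.
    apply/eqP => a0; move: hr; rewrite a0 mul0r => /eqP; rewrite mulf_eq0.
    by rewrite (negbTE b0) (negbTE t0).
  by apply: frac_eq => //; rewrite hr mulrC.
Qed.

Lemma local_units (K : fieldType) (O m : K -> Prop) : subring O -> local_with_max O m ->
  forall y, O y -> ~ m y -> O y^-1.
Proof.
move=> hO [hm huniq] y Oy hmy; apply: NNPP => hyi.
have [[mO [m0 _]] _] := hm.
have y0 : y != 0 by apply/eqP => e; apply: hmy; rewrite e.
pose P := fun A : set K => A = set0 \/ (ideal_of O A /\ A y /\ ~ A 1).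
have PI : forall X : set K, forall z, P X -> X z -> ideal_of O X /\ X y /\ ~ X 1.
  move=> X z [e|//] Xz; by rewrite e in Xz.
have [A [PA Amax]] : exists A, P A /\ forall B, (A `<` B)%classic -> ~ P B.
  apply: Zorn_bigcup => F FP Ftot.
  case: (classic (exists X, F X /\ exists z, X z)) => [[X0 [FX0 [z0 X0z0]]]|hn]; last first.
    left; apply: funext => z; apply: propext; split => //= -[X FX Xz].
    by apply: hn; exists X; split => //; exists z.
  have hI : forall X z, F X -> X z -> ideal_of O X /\ X y /\ ~ X 1.
    by move=> X z FX Xz; apply: (PI X z) => //; exact: FP.
  right; split; last split.
  - split; first by move=> z [X FX Xz]; have [[h _] _] := hI X z FX Xz; exact: h.
    split; first by exists X0 => //; have [[_ [h _]] _] := hI X0 z0 FX0 X0z0.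
    split.
      move=> a b [X1 FX1 X1a] [X2 FX2 X2b].
      case: (Ftot X1 X2 FX1 FX2) => hs.
      + exists X2 => //; have [[_ [_ [h _]]] _] := hI X2 b FX2 X2b; apply: h => //; exact: hs.
      + exists X1 => //; have [[_ [_ [h _]]] _] := hI X1 a FX1 X1a; apply: h => //; exact: hs.
    move=> a b Oa [X FX Xb]; exists X => //.
    by have [[_ [_ [_ h]]] _] := hI X b FX Xb; exact: h.
  - by exists X0 => //; have [_ [h _]] := hI X0 z0 FX0 X0z0.
  - by move=> [X FX X1]; have [_ [_ h]] := hI X 1 FX X1.
case: PA => [eA|[hA [Ay A1]]].
  apply: (Amax (fun z => exists o, O o /\ z = y * o)).
    rewrite eA; split => // h; have := h y; rewrite /=.
    by move=> /(_ (ex_intro _ 1 (conj (proj1 (proj2 hO)) (esym (mulr1 y))))).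
  right; split; last split.
  - split; first by move=> z [o [Oo ->]]; case: hO => [_ [_ [_ [_ h]]]]; exact: h.
    split; first by exists 0; split; [exact: hO.1 | rewrite mulr0].
    split.
      move=> a b [o1 [O1 ->]] [o2 [O2 ->]]; exists (o1 + o2); split; last by rewrite mulrDr.
      by case: hO => [_ [_ [h _]]]; exact: h.
    move=> a b Oa [o [Oo ->]]; exists (a * o); split; last by rewrite mulrCA.
    by case: hO => [_ [_ [_ [_ h]]]]; exact: h.
  - by exists 1; split; [exact: hO.2.1 | rewrite mulr1].
  - move=> [o [Oo e]]; apply: hyi.
    by rewrite -(mulKf y0 o) -e mulr1 in Oo.
have hmaxA : maximal_ideal_of O A.
  split => //; split => // J hJ hAJ hJ1 x Jx; apply: NNPP => nAx.
  apply: (Amax J); first by split => // h; apply: nAx; exact: h.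
  right; split => //; split => //; exact: hAJ.
by apply: hmy; apply/(huniq A hmaxA).
Qed.

Definition phiK : formula 2 := FEx 3 (FAnd (FPred ord0 (TVar 3))
   (FEq 2 (TAdd (TVar 0) (TOpp (TVar 1))) (TMul (TVar 2) (TVar 3)))).
Definition psiK : formula 2 := FPred (Ordinal (isT : (1 < 2)%N)) (TAdd (TVar 0) (TOpp (TVar 1))).
Definition G2 (R : idomainType) (Z x : {fraction R}) := exists t, (exists r : R, t = r%:F) /\ x = Z * t.
Lemma holds_phiK (R : idomainType) (O : {fraction R} -> Prop) y Z c :
  holds (KRO_preds O) (upd (envR y Z) 0 c) phiK <-> G2 Z (c - y).
Proof. by []. Qed.
Lemma holds_psiK (R : idomainType) (O : {fraction R} -> Prop) y c :
  holds (KRO_preds O) (upd (envR y 0) 0 c) psiK <-> O (c - y).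
Proof. by []. Qed.

Lemma G2D (R : idomainType) (Z x y : {fraction R}) : G2 Z x -> G2 Z y -> G2 Z (x + y).
Proof.
move=> [t1 [[r1 ->] ->]] [t2 [[r2 ->] ->]]; exists (r1 + r2)%:F.
by split; [exists (r1 + r2) | rewrite tofracD mulrDr].
Qed.
Lemma G2N (R : idomainType) (Z x : {fraction R}) : G2 Z x -> G2 Z (- x).
Proof.
move=> [t1 [[r1 ->] ->]]; exists (- r1)%:F.
by split; [exists (- r1) | rewrite tofracN mulrN].
Qed.

Lemma noPatK (R : idomainType) (O : {fraction R} -> Prop) : overring O ->
 dp_minimal (KRO_preds O) ->
 exists N, forall (Z : {fraction R}) (A B : nat -> {fraction R}),
  (forall i, (i < N)%N -> O (A i)) -> (forall j, (j < N)%N -> G2 Z (B j)) ->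
  (forall i l, (i < l)%N -> (l < N)%N -> ~ G2 Z (A i - A l)) ->
  (forall j l, (j < l)%N -> (l < N)%N -> ~ O (B j - B l)) -> False.
Proof.
move=> [[O0 [O1 [OD [ON OM]]]] _] /(_ phiK psiK) [N hN]; exists N => Z A B hA hB hAd hBd.
apply: hN.
apply: (@grp_pattern _ 2 _ _ _ O (G2 Z) (fun l => envR (A l) Z) (fun l => envR (B l) 0) A B).
- move=> l c; exact: holds_phiK.
- move=> l c; exact: holds_psiK.
- exact: OD. - exact: ON. - exact: G2D. - exact: G2N. - exact: hA. - exact: hB.
- apply: sym_ne; [exact: G2N | exact: hAd].
- apply: sym_ne; [exact: ON | exact: hBd].
Qed.

Lemma loc0 (R : idomainType) (p : R -> Prop) : prime_ideal p -> localization p 0.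
Proof.
move=> [_ [p1 _]]; exists 0, 1; split => //; by rewrite tofrac0 mul0r.
Qed.

Lemma part1 (R : idomainType) N (M : R -> Prop) : NoPat R N -> maximal_ideal M ->
  forall O m : {fraction R} -> Prop,
      overring O -> local_with_max O m ->
      (exists r : R, M r /\ ~ m r%:F) ->
      valuation_ring O /\
      exists p : R -> Prop, prime_ideal p /\ ~ same p M /\ same O (localization p).
Proof.
move=> hN hM O m hO hloc [r0 [Mr0 mr0]].
have [hsub hR] := hO.
have [O0 [O1 [OD [ON OM]]]] := hsub.
have [[[mO [m0 [mD mM]]] [hm1 _]] _] := hloc.
have hU := local_units hsub hloc.
pose p := fun r : R => m r%:F.
have hp : prime_ideal p.
  split; first split.
  - by rewrite /p tofrac0.
  - split; first by move=> x y; rewrite /p tofracD; exact: mD.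
    by move=> a x; rewrite /p tofracM; apply: mM; exact: hR.
  split; first by rewrite /p tofrac1.
  move=> x y; rewrite /p tofracM => hxy; apply: NNPP => /not_or_and [hx hy].
  have ux := hU _ (hR x) hx; have uy := hU _ (hR y) hy.
  have x0 : x%:F != 0 by apply/eqP => e; apply: hx; rewrite e.
  have y0 : y%:F != 0 by apply/eqP => e; apply: hy; rewrite e.
  apply: hm1.
  have -> : 1 = (x%:F^-1 * y%:F^-1) * (x%:F * y%:F).
    by rewrite mulrACA !mulVf // mulr1.
  by apply: mM => //; exact: OM.
have hne : ~ same p M by move=> h; apply: mr0; apply/(h r0).
have hval := Rp_val_K hN hM hp hne.
have hOsub : forall x, O x -> localization p x.
  move=> x Ox; case: (eqVneq x 0) => [->|x0]; first exact: loc0.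
  case: (hval x) => // [[c [d [hd e]]]].
  have d0 : d%:F != 0 by rewrite tofrac_eq0; exact: notp_neq0 hd.
  case: (classic (p c)) => hc; last first.
    by exists d, c; split => //; rewrite -[x]invrK e invf_div.
  exfalso; apply: hd; rewrite /p.
  have -> : d%:F = x * c%:F.
    by rewrite -(divfK d0 c%:F) -e mulrA mulfV // mul1r.
  exact: mM.
have hOsup : forall x, localization p x -> O x.
  move=> x [a [b [hb ->]]]; apply: OM; first exact: hR.
  by apply: hU; [exact: hR | exact: hb].
split.
  split; first exact: hsub.
  by move=> x x0; case: (hval x) => h; [left | right]; exact: hOsup.
exists p; split; first exact: hp.
split; first exact: hne.
by move=> x; split; [exact: hOsub | exact: hOsup].
Qed.

Lemma Opow (K : comRingType) (O : K -> Prop) x n : subring O -> O x -> O (x ^+ n).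
Proof.
move=> [O0 [O1 [OD [ON OM]]]] Ox; elim: n => [|n IH]; first by rewrite expr0.
by rewrite exprS; exact: OM.
Qed.

Lemma mpow (K : comRingType) (O m : K -> Prop) s n : subring O -> ideal_of O m ->
  O s -> m s -> m (s ^+ n.+1).
Proof.
move=> hO [_ [_ [_ mM]]] Os ms; rewrite exprS mulrC; apply: mM => //; exact: Opow.
Qed.

Lemma divFF (R : idomainType) (f g : R) : f != 0 -> (f * g)%:F / f%:F = g%:F.
Proof.
move=> f0; rewrite tofracM mulrAC mulfV ?mul1r // tofrac_eq0 //.
Qed.

Lemma ideal_sub (R : comRingType) (p : R -> Prop) a b : ideal p -> p a -> p (a - b) -> p b.
Proof.
move=> [p0 [pD pM]] ha hab.
have -> : b = a + (-1) * (a - b) by ring.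
by apply: pD => //; exact: pM.
Qed.

Lemma fld1 (F : fieldType) (a b a2 b2 S : F) : b != 0 -> b2 != 0 ->
  a * b2 * S - a * a2 * S = S * (a / b - a / b * (a2 / b2)) * (b * b2).
Proof. move=> b0 b20. field. by rewrite b0 b20. Qed.
Lemma fld2 (F : fieldType) (s : F) j k : s != 0 ->
  s ^+ k.+1 - 1 = ((s ^+ j)^-1 - (s ^+ j * s ^+ k.+1)^-1) * (s ^+ j * s ^+ k.+1).
Proof. move=> s0. field. by rewrite !expf_neq0. Qed.

Lemma part2a (R : idomainType) N (M : R -> Prop) : NoPat R N -> maximal_ideal M ->
  forall O m : {fraction R} -> Prop,
      overring O -> maximal_ideal_of O m ->
      (forall r : R, M r -> m r%:F) ->
      dp_minimal (KRO_preds O) ->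
      (forall p : R -> Prop, prime_ideal p -> ~ same p M ->
         forall x, O x -> localization p x).
Proof.
move=> hN hM O m hO hmax hdom hdpK p hp hne x Ox.
have [N2 hN2] := noPatK hO hdpK.
have [hsub hR] := hO.
have [[mO [m0 [mD mM]]] [hm1 _]] := hmax.
case: (eqVneq x 0) => [->|x0]; first exact: loc0.
case: (Rp_val_K hN hM hp hne x) => // [[c [d [hd e]]]].
case: (classic (p c)) => hc; last first.
  by exists d, c; split => //; rewrite -[x]invrK e invf_div.
exfalso.
have hd2 := dichot hN.
have hpM := prime_sub_M hM hd2 hp.
have [s [Ms nps]] := exists_s hne hpM.
have s0 : s != 0 := notp_neq0 hp nps.
have d0 : d != 0 := notp_neq0 hp hd.
have c0 : c != 0.
  apply/eqP => c0; move: e; rewrite c0 tofrac0 mul0r => /eqP; rewrite invr_eq0.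
  by rewrite (negbTE x0).
have xe : x = d%:F / c%:F by rewrite -[x]invrK e invf_div.
have sF0 : s%:F != 0 by rewrite tofrac_eq0.
have cF0 : c%:F != 0 by rewrite tofrac_eq0.
have ms : m s%:F := hdom _ Ms.
apply: (hN2 ((s%:F ^+ N2)^-1) (fun i => x ^+ i) (fun j => (s%:F^-1) ^+ j)).
- by move=> i _; exact: Opow.
- move=> j jN; exists (s ^+ (N2 - j))%:F; split; first by exists (s ^+ (N2 - j)).
  set k := (N2 - j)%N; have eN : N2 = (j + k)%N by rewrite /k; lia.
  rewrite eN tofracXn exprD invfM -mulrA mulVf ?mulr1 ?expf_neq0 //.
  by rewrite exprVn.
- move=> i l il lN [t [[r ->] ht]].
  have [k El] := split_lt il.
  have eqR : d ^+ i * c ^+ k.+1 * s ^+ N2 - d ^+ i * d ^+ k.+1 * s ^+ N2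
             = r * (c ^+ i * c ^+ k.+1).
    apply/eqP; rewrite -tofrac_eq; apply/eqP.
    rewrite tofracB !tofracM !tofracXn.
    move: ht; rewrite El xe !exprD !expr_div_n.
    set a := d%:F ^+ i; set b := c%:F ^+ i; set a2 := d%:F ^+ k.+1.
    set b2 := c%:F ^+ k.+1; set S := s%:F ^+ N2 => ht.
    have b0 : b != 0 by rewrite expf_neq0.
    have b20 : b2 != 0 by rewrite expf_neq0.
    have S0 : S != 0 by rewrite expf_neq0.
    have -> : r%:F = S * (a / b - a / b * (a2 / b2)) by rewrite ht mulVKf.
    exact: fld1.
  have hpr : p (r * (c ^+ i * c ^+ k.+1)).
    rewrite -exprD addnS exprSr mulrA; apply: idealM => //; by case: hp.
  rewrite -eqR in hpr.
  have hp1 : p (d ^+ i * c ^+ k.+1 * s ^+ N2).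
    rewrite mulrAC exprSr mulrA; apply: idealM => //; by case: hp.
  have := ideal_sub (proj1 hp) hp1 hpr.
  rewrite -mulrA; apply: prime_mul => //; first exact: prime_pow.
  apply: prime_mul => //; exact: prime_pow.
- move=> j l jl lN ho.
  have [k El] := split_lt jl.
  have e1 : s%:F ^+ k.+1 - 1 = ((s%:F^-1) ^+ j - (s%:F^-1) ^+ l) * s%:F ^+ l.
    rewrite El !exprVn exprD; exact: fld2.
  have h1 : m (s%:F ^+ k.+1 - 1).
    by rewrite e1; apply: mM => //; rewrite El addnS; exact: (mpow _ hsub (proj1 hmax) (hR s) ms).
  have h2 : m (s%:F ^+ k.+1) by exact: (mpow _ hsub (proj1 hmax) (hR s) ms).
  apply: hm1.
  have -> : (1 : {fraction R}) = s%:F ^+ k.+1 + (-1) * (s%:F ^+ k.+1 - 1) by ring.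
  apply: mD => //; apply: mM => //; case: hsub => [O0 [O1 [_ [ON _]]]]; exact: ON.
Qed.

Lemma fld3 (F : fieldType) (a b c d : F) : b != 0 -> d != 0 ->
  a * c = a / b * (c / d) * (b * d).
Proof. move=> b0 d0. field. by rewrite b0 d0. Qed.

Lemma part2b (R : idomainType) N (M : R -> Prop) : NoPat R N -> maximal_ideal M ->
  forall O : {fraction R} -> Prop, overring O ->
  forall p : R -> Prop, prime_ideal p -> ~ same p M ->
  (forall x, O x -> localization p x) ->
  prime_ideal_of O (image_in_frac p).
Proof.
move=> hN hM O [hsub hR] p hp hne hloc.
have [[p0 [pD pM]] [p1 pP]] := hp.
split; first split.
- by move=> x [r [_ ->]].
- split; first by exists 0; rewrite tofrac0.
  split.
    by move=> x y [r1 [h1 ->]] [r2 [h2 ->]]; exists (r1 + r2); rewrite tofracD; split => //; exact: pD.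
  move=> a x Oa [r [pr ->]].
  have [e [f [nf ->]]] := hloc a Oa.
  have [g [pg eg]] := p_div hN hM hp (idealM' e hp pr) nf.
  exists g; split => //.
  by rewrite mulrAC -tofracM [e * r]mulrC eg divFF //; exact: notp_neq0 nf.
split.
  move=> [r [pr e]]; apply: p1.
  by move/eqP: e; rewrite -tofrac1 tofrac_eq => /eqP ->.
move=> x y Ox Oy [r [pr e]].
have [e1 [f1 [nf1 ex]]] := hloc x Ox.
have [e2 [f2 [nf2 ey]]] := hloc y Oy.
have f10 := notp_neq0 hp nf1; have f20 := notp_neq0 hp nf2.
have eR : e1 * e2 = r * (f1 * f2).
  apply/eqP; rewrite -tofrac_eq !tofracM -e ex ey; apply/eqP.
  by apply: fld3; rewrite tofrac_eq0.
have : p (e1 * e2) by rewrite eR; exact: idealM'.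
case/pP => he.
- left; have [g [pg eg]] := p_div hN hM hp he nf1.
  by exists g; split => //; rewrite ex eg divFF.
- right; have [g [pg eg]] := p_div hN hM hp he nf2.
  by exists g; split => //; rewrite ey eg divFF.
Qed.

Lemma part2c (R : idomainType) (M : R -> Prop) (O : {fraction R} -> Prop) :
  overring O ->
  forall q : {fraction R} -> Prop, prime_ideal_of O q ->
    (forall x, q x -> image_in_frac M x) -> ~ same q (image_in_frac M) ->
    exists p : R -> Prop, prime_ideal p /\ same q (image_in_frac p).
Proof.
move=> [hsub hR] q [[qO [q0 [qD qM]]] [q1 qP]] hqM _.
exists (fun r => q r%:F); split.
  split; first split.
  - by rewrite tofrac0.
  - split; first by move=> x y; rewrite tofracD; exact: qD.
    by move=> a x; rewrite tofracM; apply: qM; exact: hR.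
  split; first by rewrite tofrac1.
  by move=> x y; rewrite tofracM; apply: qP; exact: hR.
move=> x; split.
  by move=> qx; have [r [_ e]] := hqM x qx; exists r; split => //; rewrite -e.
by move=> [r [qr ->]].
Qed.

Theorem mainTheorem18 (R : idomainType) (M : R -> Prop) :
  dp_minimal (@no_preds R) -> maximal_ideal M ->
  (* (1) *)
  (forall O m : {fraction R} -> Prop,
      overring O -> local_with_max O m ->
      (exists r : R, M r /\ ~ m r%:F) ->
      valuation_ring O /\
      exists p : R -> Prop, prime_ideal p /\ ~ same p M /\ same O (localization p))
  /\
  (* (2) *)
  (forall O m : {fraction R} -> Prop,
      overring O -> valuation_ring O -> maximal_ideal_of O m ->
      (forall r : R, M r -> m r%:F) ->
      dp_minimal (KRO_preds O) ->
      (forall p : R -> Prop, prime_ideal p -> ~ same p M ->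
         forall x, O x -> localization p x) /\
      (forall p : R -> Prop, prime_ideal p -> ~ same p M ->
         prime_ideal_of O (image_in_frac p)) /\
      (forall q : {fraction R} -> Prop, prime_ideal_of O q ->
         (forall x, q x -> image_in_frac M x) -> ~ same q (image_in_frac M) ->
         exists p : R -> Prop, prime_ideal p /\ same q (image_in_frac p))).
Proof.
move=> hdp hM; have [N hN] := noPatR hdp.
split; first exact: part1 hN hM.
move=> O m hO _ hmax hdom hdpK.
have h2a := part2a hN hM hO hmax hdom hdpK.
split; first exact: h2a.
split; last exact: part2c hO.
move=> p hp hne; apply: (part2b hN hM hO hp hne); exact: h2a.
Qed.
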